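(* For every multifield morphism $\sigma:F\to K$ between special multifields, the restriction $\sigma|_{F^\bullet}:F^\bullet\to K^\bullet$ is a morphism of special groups (where $F^\bullet$, $K^\bullet$ carry the special group structures $\langle a,b\rangle\equiv\langle c,d\rangle$ iff $ab=cd$ and $a\in c+d$); the assignments $F\mapsto F^\bullet$, $\sigma\mapsto\sigma|_{F^\bullet}$ define a functor $S$ from the category $\mathcal{SMF}$ of special multifields to the category $\mathcal{SG}$ of special groups.
   Context: A multiring is a tuple $(R,+,\cdot,-,0,1)$ with $+:R\times R\to\mathcal P(R)\setminus\{\emptyset\}$ satisfying: $z\in x+y\Rightarrow x\in z+(-y)$ and $y\in(-x)+z$; $y\in0+x\iff y=x$; $+$ associative and commutative; $(R,\cdot,1)$ a commutative monoid; $a0=0$; $c\in a+b\Rightarrow cd\in ad+bd$. A multifield has every nonzero element invertible. A multiring morphism $f$ satisfies $c\in a+b\Rightarrow f(c)\in f(a)+f(b)$, $f(-a)=-f(a)$, $f(0)=0$, $f(ab)=f(a)f(b)$, $f(1)=1$. A special multifield is a multifield $F$ such that, with $F^\bullet=F\setminus\{0\}$: (i) $a^2=1$ for $a\in F^\bullet$; (ii) $a+(-a)=F$ for $a\in F^\bullet$; (iii) $ab=cd$ and $a\in c+d$ imply $c\in a+b$ ($a,b,c,d\in F^\bullet$); (iv) $ab=cd=ef$, $a\in c+d$, $c\in e+f$ imply $a\in e+f$; (v) if there are $x,y,z\in F^\bullet$ with $ax=cy$, $a=xz$, $c=yz$, $a\in c+y$, $b\in x+z$, $d\in y+z$, then there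 are $t,v,w\in F^\bullet$ with $bt=cv$, $b=tw$, $c=vw$, $b\in c+v$, $a\in t+w$, $d\in v+w$. $\mathcal{SMF}$ has special multifields as objects and multiring morphisms as morphisms. A special group is $(G,-1,\equiv)$ with $G$ a group of exponent 2, $-1\in G$, $\equiv$ a relation on $G\times G$ satisfying: (SG0) equivalence relation; (SG1) $\langle a,b\rangle\equiv\langle b,a\rangle$; (SG2) $\langle a,-a\rangle\equiv\langle1,-1\rangle$; (SG3) $\langle a,b\rangle\equiv\langle c,d\rangle\Rightarrow ab=cd$; (SG4) $\langle a,b\rangle\equiv\langle c,d\rangle\Rightarrow\langle a,-c\rangle\equiv\langle -b,d\rangle$; (SG5) $\langle a,b\rangle\equiv\langle c,d\rangle\Rightarrow\langle ga,gb\rangle\equiv\langle gc,gd\rangle$; (SG6) the relation on $G^3$ given by $\langle a_1,a_2,a_3\rangle\equiv\langle b_1,b_2,b_3\rangle$ iff $\exists x,y,z$ with $\langle a_1,x\rangle\equiv\langle b_1,y\rangle$, $\langle a_2,a_3\rangle\equiv\langle x,z\rangle$, $\langle b_2,b_3\rangle\equiv\langle y,z\rangle$ is transitive. A morphism of special groups $f:G\to H$ is a group homomorphism with $f(-1)=-1$ and $\langle a,b\rangle\equiv_G\langle c,d\rangle\Rightarrow\langle f(a),f(b)\rangle\equiv_H\langle f(c),f(d)\rangle$. *)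

(* Defs.v *)
(* [add x y z] means  z \in x + y  (the multivalued sum). *)
Record multiring_axioms (T : Type) (add : T -> T -> T -> Prop) (neg : T -> T)
    (zero one : T) (mul : T -> T -> T) : Prop := {
  ax_add_nonempty : forall x y, exists z, add x y z;
  ax_add_rev : forall x y z, add x y z -> add z (neg y) x /\ add (neg x) z y;
  ax_add_zero : forall x y, add zero x y <-> y = x;
  ax_add_assoc : forall x y z w,
      (exists t, add x y t /\ add t z w) <-> (exists t, add y z t /\ add x t w);
  ax_add_comm : forall x y z, add x y z <-> add y x z;
  ax_mul_assoc : forall a b c, mul a (mul b c) = mul (mul a b) c;
  ax_mul_comm : forall a b, mul a b = mul b a;
  ax_mul_one_l : forall a, mul one a = a;
  ax_mul_one_r : forall a, mul a one = a;
  ax_mul_zero : forall a, mul a zero = zero;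
  ax_distr : forall a b c d, add a b c -> add (mul a d) (mul b d) (mul c d)
}.

Record multiring := MultiRing {
  mr_car :> Type;
  mr_add : mr_car -> mr_car -> mr_car -> Prop;
  mr_neg : mr_car -> mr_car;
  mr_zero : mr_car;
  mr_one : mr_car;
  mr_mul : mr_car -> mr_car -> mr_car;
  mr_ax : multiring_axioms mr_car mr_add mr_neg mr_zero mr_one mr_mul
}.

Arguments mr_add {_}. Arguments mr_neg {_}. Arguments mr_zero {_}.
Arguments mr_one {_}. Arguments mr_mul {_}.

Definition is_multifield (F : multiring) : Prop :=
  (@mr_one F <> mr_zero) /\
  (forall a : F, a <> mr_zero -> exists b : F, mr_mul a b = mr_one).

Definition is_special (F : multiring) : Prop :=
  let nz (a : F) := a <> mr_zero in
  let add := @mr_add F in let mul := @mr_mul F in let neg := @mr_neg F in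
  (forall a, nz a -> mul a a = mr_one) /\
  (* (ii) a + (-a) = F *)
  (forall a x, nz a -> add a (neg a) x) /\
  (forall a b c d, nz a -> nz b -> nz c -> nz d ->
     mul a b = mul c d -> add c d a -> add a b c) /\
  (forall a b c d e f, nz a -> nz b -> nz c -> nz d -> nz e -> nz f ->
     mul a b = mul c d -> mul c d = mul e f -> add c d a -> add e f c ->
     add e f a) /\
  (forall a b c d, nz a -> nz b -> nz c -> nz d ->
     (exists x y z, nz x /\ nz y /\ nz z /\
        mul a x = mul c y /\ a = mul x z /\ c = mul y z /\
        add c y a /\ add x z b /\ add y z d) ->
     (exists t v w, nz t /\ nz v /\ nz w /\
        mul b t = mul c v /\ b = mul t w /\ c = mul v w /\
        add c v b /\ add t w a /\ add v w d)).

Record special_multifield := SpecialMultifield {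
  smf_mr :> multiring;
  smf_mf : is_multifield smf_mr;
  smf_special : is_special smf_mr
}.

Definition is_mr_morphism (F K : multiring) (f : F -> K) : Prop :=
  (forall a b c : F, mr_add a b c -> mr_add (f a) (f b) (f c)) /\
  (forall a : F, f (mr_neg a) = mr_neg (f a)) /\
  f mr_zero = mr_zero /\
  (forall a b : F, f (mr_mul a b) = mr_mul (f a) (f b)) /\
  f mr_one = mr_one.

Record mr_morphism (F K : multiring) := MrMorphism {
  mr_fun :> F -> K;
  mr_fun_morph : is_mr_morphism F K mr_fun
}.
Arguments mr_fun {F K}.

Lemma id_is_mr_morphism (F : multiring) : is_mr_morphism F F (fun x => x).
Proof. repeat split; auto. Qed.

Definition mr_id (F : multiring) : mr_morphism F F :=
  MrMorphism F F (fun x => x) (id_is_mr_morphism F).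

Lemma comp_is_mr_morphism (F K L : multiring) (g : mr_morphism K L)
  (f : mr_morphism F K) : is_mr_morphism F L (fun x => g (f x)).
Proof.
  destruct (mr_fun_morph _ _ f) as [f1 [f2 [f3 [f4 f5]]]].
  destruct (mr_fun_morph _ _ g) as [g1 [g2 [g3 [g4 g5]]]].
  repeat split; intros.
  - apply g1, f1; assumption.
  - rewrite f2; apply g2.
  - rewrite f3; apply g3.
  - rewrite f4; apply g4.
  - rewrite f5; apply g5.
Qed.

Definition mr_comp (F K L : multiring) (g : mr_morphism K L)
  (f : mr_morphism F K) : mr_morphism F L :=
  MrMorphism F L (fun x => g (f x)) (comp_is_mr_morphism F K L g f).

Definition sg_equiv3 (G : Type) (eqv : G -> G -> G -> G -> Prop)
  (a1 a2 a3 b1 b2 b3 : G) : Prop :=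
  exists x y z, eqv a1 x b1 y /\ eqv a2 a3 x z /\ eqv b2 b3 y z.

(* (G, *, 1) a group of exponent 2, m1 the distinguished element -1, and
   eqv a b c d meaning <a,b> == <c,d>; -a is m1 * a. *)
Definition is_special_group (G : Type) (mul : G -> G -> G) (one m1 : G)
  (eqv : G -> G -> G -> G -> Prop) : Prop :=
  (forall a b c, mul a (mul b c) = mul (mul a b) c) /\
  (forall a, mul one a = a) /\ (forall a, mul a one = a) /\
  (forall a, mul a a = one) /\
  (forall a b, eqv a b a b) /\
  (forall a b c d, eqv a b c d -> eqv c d a b) /\
  (forall a b c d e f, eqv a b c d -> eqv c d e f -> eqv a b e f) /\
  (forall a b, eqv a b b a) /\
  (forall a, eqv a (mul m1 a) one m1) /\
  (forall a b c d, eqv a b c d -> mul a b = mul c d) /\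
  (forall a b c d, eqv a b c d -> eqv a (mul m1 c) (mul m1 b) d) /\
  (forall a b c d g, eqv a b c d -> eqv (mul g a) (mul g b) (mul g c) (mul g d)) /\
  (forall a1 a2 a3 b1 b2 b3 c1 c2 c3,
     sg_equiv3 G eqv a1 a2 a3 b1 b2 b3 -> sg_equiv3 G eqv b1 b2 b3 c1 c2 c3 ->
     sg_equiv3 G eqv a1 a2 a3 c1 c2 c3).

Definition is_sg_morphism (G : Type) (mulG : G -> G -> G) (m1G : G)
  (eqvG : G -> G -> G -> G -> Prop)
  (H : Type) (mulH : H -> H -> H) (m1H : H) (eqvH : H -> H -> H -> H -> Prop)
  (f : G -> H) : Prop :=
  (forall a b, f (mulG a b) = mulH (f a) (f b)) /\
  f m1G = m1H /\
  (forall a b c d, eqvG a b c d -> eqvH (f a) (f b) (f c) (f d)).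

Definition Fbullet (F : multiring) : Type := { x : F | x <> mr_zero }.

Lemma mf_mul_nz (F : multiring) (HF : is_multifield F) (a b : F) :
  a <> mr_zero -> b <> mr_zero -> mr_mul a b <> mr_zero.
Proof.
  intros Ha Hb Hab. destruct HF as [_ Hinv]. destruct (Hinv a Ha) as [a' Ha'].
  destruct (mr_ax F) as [_ _ _ _ _ Massoc Mcomm Mone _ Mzero _].
  apply Hb.
  rewrite <- (Mone b), <- Ha', (Mcomm a a'), <- Massoc, Hab. apply Mzero.
Qed.

Lemma mr_neg_neg (F : multiring) (x : F) : mr_neg (mr_neg x) = x.
Proof.
  destruct (mr_ax F) as [_ Rev Zero _ _ _ _ _ _ _ _].
  assert (H0 : mr_add mr_zero x x) by (apply Zero; reflexivity).
  destruct (Rev _ _ _ H0) as [H1 _].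
  destruct (Rev _ _ _ H1) as [H2 _].
  symmetry. apply (proj1 (Zero _ _) H2).
Qed.

Lemma mr_neg_zero (F : multiring) : @mr_neg F mr_zero = mr_zero.
Proof.
  destruct (mr_ax F) as [_ Rev Zero _ _ _ _ _ _ _ _].
  assert (H0 : @mr_add F mr_zero mr_zero mr_zero) by (apply Zero; reflexivity).
  destruct (Rev _ _ _ H0) as [H1 _].
  symmetry; apply (proj1 (Zero _ _) H1).
Qed.

Lemma mf_neg_one_nz (F : multiring) (HF : is_multifield F) :
  @mr_neg F mr_one <> mr_zero.
Proof.
  intros H. apply (proj1 HF).
  rewrite <- (mr_neg_neg F mr_one), H. apply mr_neg_zero.
Qed.

Definition Fb_mul (F : special_multifield) (a b : Fbullet F) : Fbullet F :=
  exist _ (mr_mul (proj1_sig a) (proj1_sig b))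
    (mf_mul_nz F (smf_mf F) _ _ (proj2_sig a) (proj2_sig b)).

Definition Fb_one (F : special_multifield) : Fbullet F :=
  exist _ mr_one (proj1 (smf_mf F)).

Definition Fb_m1 (F : special_multifield) : Fbullet F :=
  exist _ (mr_neg mr_one) (mf_neg_one_nz F (smf_mf F)).

Definition Fb_equiv (F : special_multifield) (a b c d : Fbullet F) : Prop :=
  mr_mul (proj1_sig a) (proj1_sig b) = mr_mul (proj1_sig c) (proj1_sig d) /\
  mr_add (proj1_sig c) (proj1_sig d) (proj1_sig a).

Lemma mr_morphism_nz (F K : special_multifield) (f : mr_morphism F K) (a : F) :
  a <> mr_zero -> f a <> mr_zero.
Proof.
  intros Ha Hfa. destruct (proj2 (smf_mf F) a Ha) as [a' Ha'].
  destruct (mr_fun_morph _ _ f) as [_ [_ [_ [f4 f5]]]].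
  apply (proj1 (smf_mf K)).
  rewrite <- f5, <- Ha', f4, Hfa.
  destruct (mr_ax K) as [_ _ _ _ _ _ Mcomm _ _ Mzero _].
  rewrite Mcomm. apply Mzero.
Qed.

Definition restr (F K : special_multifield) (f : mr_morphism F K)
  (a : Fbullet F) : Fbullet K :=
  exist _ (f (proj1_sig a)) (mr_morphism_nz F K f _ (proj2_sig a)).

(* Main.v *)
Require Import Defs.
From Stdlib Require Import ProofIrrelevance.

Section MR.
Context {F : multiring}.
Notation add := (@mr_add F). Notation mul := (@mr_mul F). Notation neg := (@mr_neg F).
Lemma Mcomm (a b : F) : mul a b = mul b a. Proof. exact (@ax_mul_comm _ _ _ _ _ _ (mr_ax F) a b). Qed.
Lemma Massoc (a b c : F) : mul a (mul b c) = mul (mul a b) c. Proof. exact (@ax_mul_assoc _ _ _ _ _ _ (mr_ax F) a b c). Qed.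
Lemma Mone (a : F) : mul mr_one a = a. Proof. exact (@ax_mul_one_l _ _ _ _ _ _ (mr_ax F) a). Qed.
Lemma Mone_r (a : F) : mul a mr_one = a. Proof. exact (@ax_mul_one_r _ _ _ _ _ _ (mr_ax F) a). Qed.
Lemma Mzero (a : F) : mul a mr_zero = mr_zero. Proof. exact (@ax_mul_zero _ _ _ _ _ _ (mr_ax F) a). Qed.
Lemma Acomm (a b c : F) : add a b c -> add b a c. Proof. apply (@ax_add_comm _ _ _ _ _ _ (mr_ax F)). Qed.
Lemma Arev (x y z : F) : add x y z -> add z (neg y) x /\ add (neg x) z y. Proof. apply (@ax_add_rev _ _ _ _ _ _ (mr_ax F)). Qed.
Lemma Azero (x y : F) : add mr_zero x y <-> y = x. Proof. apply (@ax_add_zero _ _ _ _ _ _ (mr_ax F)). Qed.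
Lemma Adistr (a b c d : F) : add a b c -> add (mul a d) (mul b d) (mul c d). Proof. apply (@ax_distr _ _ _ _ _ _ (mr_ax F)). Qed.

Lemma neg_mul (a : F) : mul (neg mr_one) a = neg a.
Proof.
  assert (H0 : add mr_zero mr_one mr_one) by (apply Azero; reflexivity).
  destruct (Arev _ _ _ H0) as [H1 _].
  apply (Adistr _ _ _ a) in H1. rewrite Mone, (Mcomm mr_zero), Mzero in H1.
  destruct (Arev _ _ _ H1) as [_ H2]. apply Acomm in H2. apply (proj1 (Azero _ _) H2).
Qed.
End MR.



Section Abs.
Variable G : Type.
Variable mul : G -> G -> G.
Variable one : G.
Variable eqv : G -> G -> G -> G -> Prop.
Hypothesis Hassoc : forall a b c, mul a (mul b c) = mul (mul a b) c.
Hypothesis Hcomm : forall a b, mul a b = mul b a.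
Hypothesis Hone : forall a, mul one a = a.
Hypothesis Hsq : forall a, mul a a = one.
Hypothesis Esym : forall a b c d, eqv a b c d -> eqv c d a b.
Hypothesis Etrans : forall a b c d e f, eqv a b c d -> eqv c d e f -> eqv a b e f.
Hypothesis Eswap : forall a b, eqv a b b a.
Hypothesis Eprod : forall a b c d, eqv a b c d -> mul a b = mul c d.
Hypothesis Escale : forall a b c d g, eqv a b c d -> eqv (mul g a) (mul g b) (mul g c) (mul g d).
Hypothesis HV : forall a b c d, sg_equiv3 G eqv a b (mul a b) c d (mul c d) ->
                          sg_equiv3 G eqv b a (mul a b) c d (mul c d).

Local Notation R := (sg_equiv3 G eqv).

Lemma R_sym a1 a2 a3 b1 b2 b3 : R a1 a2 a3 b1 b2 b3 -> R b1 b2 b3 a1 a2 a3.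
Proof. intros [x [y [z [H1 [H2 H3]]]]]. exists y, x, z. auto. Qed.

Lemma R_r23 a1 a2 a3 b1 b2 b3 c2 c3 : R a1 a2 a3 b1 b2 b3 -> eqv b2 b3 c2 c3 -> R a1 a2 a3 b1 c2 c3.
Proof. intros [x [y [z [H1 [H2 H3]]]]] H. exists x, y, z. split; [|split]; eauto. Qed.

Lemma R_swap23 a1 a2 a3 b1 b2 b3 : R a1 a2 a3 b1 b2 b3 -> R a1 a2 a3 b1 b3 b2.
Proof. intros H; apply (R_r23 _ _ _ _ _ _ _ _ H); auto. Qed.

Lemma R_prod a1 a2 a3 b1 b2 b3 : R a1 a2 a3 b1 b2 b3 -> mul a1 (mul a2 a3) = mul b1 (mul b2 b3).
Proof.
  intros [x [y [z [H1 [H2 H3]]]]].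
  rewrite (Eprod _ _ _ _ H2), (Eprod _ _ _ _ H3), !Hassoc, (Eprod _ _ _ _ H1). reflexivity.
Qed.

Lemma R_scale g a1 a2 a3 b1 b2 b3 : R a1 a2 a3 b1 b2 b3 ->
  R (mul g a1) (mul g a2) (mul g a3) (mul g b1) (mul g b2) (mul g b3).
Proof. intros [x [y [z [H1 [H2 H3]]]]]. exists (mul g x), (mul g y), (mul g z). auto. Qed.

Lemma ggx g x : mul g (mul g x) = x.
Proof. rewrite Hassoc, Hsq, Hone. reflexivity. Qed.

Lemma pp a b p : mul (mul p a) (mul p b) = mul a b.
Proof.
  rewrite <- Hassoc, (Hassoc a p b), (Hcomm a p), <- (Hassoc p a b). apply ggx.
Qed.

Lemma third p u v w : p = mul u (mul v w) -> mul p w = mul (mul p u) (mul p v).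
Proof.
  intros ->. rewrite pp, <- !Hassoc, Hsq, (Hcomm v one), Hone. reflexivity.
Qed.

Lemma R_l12 a1 a2 a3 b1 b2 b3 : R a1 a2 a3 b1 b2 b3 -> R a1 a2 a3 b2 b1 b3.
Proof.
  intros H. pose (p := mul b1 (mul b2 b3)).
  assert (Hp : p = mul a1 (mul a2 a3)) by (symmetry; apply (R_prod _ _ _ _ _ _ H)).
  apply R_sym in H. apply (R_scale p) in H.
  rewrite (third p b1 b2 b3 eq_refl), (third p a1 a2 a3 Hp) in H.
  apply HV in H. rewrite <- (third p b1 b2 b3 eq_refl), <- (third p a1 a2 a3 Hp) in H.
  apply (R_scale p) in H. rewrite !ggx in H. apply R_sym. exact H.
Qed.

Lemma R_r12 a1 a2 a3 b1 b2 b3 c1 c2 : R a1 a2 a3 b1 b2 b3 -> eqv b1 b2 c1 c2 -> R a1 a2 a3 c1 c2 b3.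
Proof.
  intros H E.
  apply R_l12, R_swap23, R_l12, R_swap23 in H.
  apply (R_r23 _ _ _ _ _ _ _ _ H) in E.
  apply R_l12, R_swap23 in E. exact E.
Qed.

Lemma R_trans a1 a2 a3 b1 b2 b3 c1 c2 c3 :
  R a1 a2 a3 b1 b2 b3 -> R b1 b2 b3 c1 c2 c3 -> R a1 a2 a3 c1 c2 c3.
Proof.
  intros H [x [y [z [H1 [H2 H3]]]]].
  apply (R_r23 _ _ _ _ _ _ _ _ H) in H2.
  apply (R_r12 _ _ _ _ _ _ _ _ H2) in H1.
  apply (R_r23 _ _ _ _ _ _ _ _ H1). auto.
Qed.
End Abs.

Lemma Fb_eq (F : multiring) (a b : Fbullet F) : proj1_sig a = proj1_sig b -> a = b.
Proof. destruct a as [a Ha], b as [b Hb]; simpl; intros ->. f_equal; apply proof_irrelevance. Qed.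

Section SMF.
Variable F : special_multifield.
Notation add := (@mr_add F). Notation mul := (@mr_mul F). Notation neg := (@mr_neg F).
Notation nz a := (a <> @mr_zero F).

Lemma Sq (a : F) : nz a -> mul a a = mr_one.
Proof. apply (proj1 (smf_special F)). Qed.
Lemma Sii (a x : F) : nz a -> add a (neg a) x.
Proof. apply (proj1 (proj2 (smf_special F))). Qed.
Lemma Siii (a b c d : F) : nz a -> nz b -> nz c -> nz d -> mul a b = mul c d -> add c d a -> add a b c.
Proof. apply (proj1 (proj2 (proj2 (smf_special F)))). Qed.
Lemma Siv (a b c d e f : F) : nz a -> nz b -> nz c -> nz d -> nz e -> nz f ->
     mul a b = mul c d -> mul c d = mul e f -> add c d a -> add e f c -> add e f a.
Proof. apply (proj1 (proj2 (proj2 (proj2 (smf_special F))))). Qed.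

Lemma add_self (a b : F) : nz a -> add a b a.
Proof.
  intros Ha. pose proof (Sii a b Ha) as H. apply Acomm in H.
  destruct (Arev _ _ _ H) as [_ H2]. rewrite mr_neg_neg in H2. exact H2.
Qed.

Lemma ggxF (g x : F) : nz g -> mul g (mul g x) = x.
Proof. intros Hg. rewrite Massoc, Sq, Mone; auto. Qed.

Lemma ppF (g a b : F) : nz g -> mul (mul g a) (mul g b) = mul a b.
Proof.
  intros Hg. rewrite <- Massoc, (Massoc a g b), (Mcomm a g), <- (Massoc g a b). apply ggxF; auto.
Qed.

Lemma acbd (a b c d : F) : nz b -> nz c -> mul a b = mul c d -> mul a c = mul b d.
Proof.
  intros Hb Hc H. rewrite <- (ggxF b (mul a c) Hb). f_equal.
  rewrite Massoc, (Mcomm b a), H, (Mcomm (mul c d) c). apply ggxF; auto.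
Qed.

Lemma Fb_sg : is_special_group (Fbullet F) (Fb_mul F) (Fb_one F) (Fb_m1 F) (Fb_equiv F).
Proof.
  assert (Assoc : forall a b c, Fb_mul F a (Fb_mul F b c) = Fb_mul F (Fb_mul F a b) c)
    by (intros; apply Fb_eq; apply Massoc).
  assert (Comm : forall a b, Fb_mul F a b = Fb_mul F b a) by (intros; apply Fb_eq; apply Mcomm).
  assert (One : forall a, Fb_mul F (Fb_one F) a = a) by (intros; apply Fb_eq; apply Mone).
  assert (Sq1 : forall a, Fb_mul F a a = Fb_one F)
    by (intros [a Ha]; apply Fb_eq; simpl; apply Sq; auto).
  assert (Sym : forall a b c d, Fb_equiv F a b c d -> Fb_equiv F c d a b).
  { intros [a Ha] [b Hb] [c Hc] [d Hd]; unfold Fb_equiv; simpl; intros [E A].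
    split; [auto | apply (Siii a b c d); auto]. }
  assert (Trans : forall a b c d e f, Fb_equiv F a b c d -> Fb_equiv F c d e f -> Fb_equiv F a b e f).
  { intros [a Ha] [b Hb] [c Hc] [d Hd] [e He] [f Hf]; unfold Fb_equiv; simpl; intros [E A] [E' A'].
    split; [congruence | apply (Siv a b c d e f); auto]. }
  assert (Swap : forall a b, Fb_equiv F a b b a).
  { intros [a Ha] [b Hb]; unfold Fb_equiv; simpl. split; [apply Mcomm | apply Acomm, add_self; auto]. }
  assert (Prod : forall a b c d, Fb_equiv F a b c d -> Fb_mul F a b = Fb_mul F c d).
  { intros a b c d [E _]. apply Fb_eq. exact E. }
  assert (Scale : forall a b c d g, Fb_equiv F a b c d ->
            Fb_equiv F (Fb_mul F g a) (Fb_mul F g b) (Fb_mul F g c) (Fb_mul F g d)).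
  { intros [a Ha] [b Hb] [c Hc] [d Hd] [g Hg]; unfold Fb_equiv; simpl; intros [E A].
    split. rewrite !ppF; auto.
    apply (Adistr _ _ _ g) in A. rewrite !(Mcomm _ g) in A. exact A. }
  assert (V : forall a b c d, sg_equiv3 _ (Fb_equiv F) a b (Fb_mul F a b) c d (Fb_mul F c d) ->
                          sg_equiv3 _ (Fb_equiv F) b a (Fb_mul F a b) c d (Fb_mul F c d)).
  { intros [a Ha] [b Hb] [c Hc] [d Hd]; unfold sg_equiv3, Fb_equiv; simpl.
    intros [[x Hx] [[y Hy] [[z Hz] [[E1 A1] [[E2 A2] [E3 A3]]]]]]; simpl in *.
    assert (Ba : mul b (mul a b) = a) by (rewrite (Mcomm a b); apply ggxF; auto).
    assert (Dc : mul d (mul c d) = c) by (rewrite (Mcomm c d); apply ggxF; auto).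
    rewrite Ba in E2. rewrite Dc in E3.
    destruct (proj2 (proj2 (proj2 (proj2 (smf_special F)))) a b c d Ha Hb Hc Hd)
      as [t [v [w [Ht [Hv [Hw [F1 [F2 [F3 [G1 [G2 G3]]]]]]]]]]].
    { exists x, y, z. repeat split; auto. }
    exists (exist _ t Ht), (exist _ v Hv), (exist _ w Hw); simpl.
    rewrite ggxF, Dc; auto. }
  unfold is_special_group.
  split; [exact Assoc|]. split; [exact One|]. split; [intros; rewrite Comm; apply One|].
  split; [exact Sq1|].
  split; [intros a b; apply (Trans _ _ _ _ _ _ (Swap a b) (Swap b a))|].
  split; [exact Sym|]. split; [exact Trans|]. split; [exact Swap|].
  split.
  { intros [a Ha]; unfold Fb_equiv; simpl. split.
    - rewrite Massoc, (Mcomm a), <- Massoc, Sq, Mone, Mone_r; auto.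
    - apply Sii. apply (proj1 (smf_mf F)). }
  split; [exact Prod|].
  split.
  { intros [a Ha] [b Hb] [c Hc] [d Hd]; unfold Fb_equiv; simpl; intros [E A].
    pose proof (mf_neg_one_nz F (smf_mf F)) as Hm.
    split.
    - rewrite Massoc, (Mcomm a), <- !Massoc. f_equal. apply acbd; auto.
    - rewrite !neg_mul. apply Acomm.
      assert (A' : add a b d) by (apply (Siii a b d c); auto; [rewrite E; apply Mcomm | apply Acomm; auto]).
      apply (proj1 (Arev _ _ _ A')). }
  split; [exact Scale|].
  exact (R_trans _ _ _ _ Assoc Comm One Sq1 Sym Trans Swap Prod Scale V).
Qed.
End SMF.

Theorem corollary5p11 :
  (* object part: F^bullet is a special group *)
  (forall F : special_multifield,
     is_special_group (Fbullet F) (Fb_mul F) (Fb_one F) (Fb_m1 F) (Fb_equiv F)) /\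
  (* morphism part: the restriction of a multiring morphism is a special group morphism *)
  (forall (F K : special_multifield) (sigma : mr_morphism F K),
     is_sg_morphism (Fbullet F) (Fb_mul F) (Fb_m1 F) (Fb_equiv F)
                    (Fbullet K) (Fb_mul K) (Fb_m1 K) (Fb_equiv K)
                    (restr F K sigma)) /\
  (* functoriality: identities *)
  (forall (F : special_multifield) (a : Fbullet F), restr F F (mr_id F) a = a) /\
  (* functoriality: composition *)
  (forall (F K L : special_multifield) (tau : mr_morphism K L)
          (sigma : mr_morphism F K) (a : Fbullet F),
     restr F L (mr_comp F K L tau sigma) a = restr K L tau (restr F K sigma a)).
Proof.
  split; [exact Fb_sg|].
  split.
  { intros F K sigma.
    destruct (mr_fun_morph _ _ sigma) as [f1 [f2 [f3 [f4 f5]]]].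
    split; [|split].
    - intros a b; apply Fb_eq; simpl; apply f4.
    - apply Fb_eq; simpl. rewrite f2, f5. reflexivity.
    - intros [a Ha] [b Hb] [c Hc] [d Hd]; unfold Fb_equiv; simpl; intros [E A].
      split; [rewrite <- !f4, E; reflexivity | apply f1; exact A]. }
  split.
  - intros F a; apply Fb_eq; reflexivity.
  - intros; apply Fb_eq; reflexivity.
Qed.
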